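(* The logic $\mathsf{F}(\mathrm{LTL}[\mathsf{O}])$ can be exponentially more succinct than $\mathrm{LTL}[\mathsf{X},\mathsf{wX},\mathsf{F},\mathsf{G}]$ (over finite traces). That is, there exist finite sets of atomic propositions $AP_n$ and languages $\mathcal{L}_n \subseteq (2^{AP_n})^+$, $n \geq 1$, such that for every $n\ge 1$: (i) there is a formula $\phi \in \mathsf{F}(\mathrm{LTL}[\mathsf{O}])$ with $\mathcal{L}(\phi)=\mathcal{L}_n$ and $\mathrm{size}(\phi)$ bounded by a polynomial in $n$; and (ii) every formula $\psi\in \mathrm{LTL}[\mathsf{X},\mathsf{wX},\mathsf{F},\mathsf{G}]$ with $\mathcal{L}(\psi)=\mathcal{L}_n$ has $\mathrm{size}(\psi) \in 2^{\Omega(n)}$.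
   Context: Let $AP$ be a finite set of atomic propositions and $\Sigma=2^{AP}$. Formulae (in negation normal form) are generated by $\phi ::= p \mid \neg p \mid \phi\lor\phi\mid\phi\land\phi\mid \mathsf{X}\phi\mid\mathsf{wX}\phi\mid\mathsf{F}\phi\mid\mathsf{G}\phi\mid\mathsf{Y}\phi\mid\mathsf{wY}\phi\mid\mathsf{O}\phi\mid\mathsf{H}\phi$ with $p\in AP$. For a finite non-empty trace $\sigma=w_0\cdots w_m\in\Sigma^+$ (so $|\sigma|=m+1$, $\sigma[i]=w_i$) and a position $0\le i<|\sigma|$: $\sigma,i\models p$ iff $p\in\sigma[i]$; $\sigma,i\models\neg p$ iff $p\notin\sigma[i]$; $\lor,\land$ as usual; $\sigma,i\models\mathsf{X}\phi$ iff $i+1<|\sigma|$ and $\sigma,i+1\models\phi$; $\sigma,i\models\mathsf{wX}\phi$ iff $i+1=|\sigma|$ or $\sigma,i+1\models\phi$; $\sigma,i\models\mathsf{F}\phi$ iff $\sigma,j\models\phi$ for some $i\le j<|\sigma|$; $\sigma,i\models\mathsf{G}\phi$ iff $\sigma,j\models\phi$ for all $i\le j<|\sigma|$; $\sigma,i\models\mathsf{Y}\phi$ iff $i>0$ and $\sigma,i-1\models\phi$; $\sigma,i\models\mathsf{wY}\phi$ iff $i=0$ or $\sigma,i-1\models\phi$; $\sigma,i\models\mathsf{O}\phi$ iff $\sigma,j\models\phi$ for some $0\le j\le i$; $\sigma,i\models\mathsf{H}\phi$ iff $\sigma,j\models\phi$ for all $0\le j\le i$. $\sigma\models\phi$ means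 $\sigma,0\models\phi$, and $\mathcal{L}(\phi)=\{\sigma\in\Sigma^+:\sigma\models\phi\}$. Size: $\mathrm{size}(p)=\mathrm{size}(\neg p)=1$, $\mathrm{size}(\circ\phi)=\mathrm{size}(\phi)+1$ for each unary temporal operator $\circ$, $\mathrm{size}(\phi_1\circ\phi_2)=\mathrm{size}(\phi_1)+\mathrm{size}(\phi_2)+1$ for $\circ\in\{\land,\lor\}$. For a set $S$ of temporal operators, $\mathrm{LTL}[S]$ is the set of formulae all of whose temporal operators lie in $S$, and $\mathsf{F}(\mathrm{LTL}[S])$ is the set of formulae of the form $\mathsf{F}(\alpha)$ with $\alpha\in\mathrm{LTL}[S]$. *)

(* Defs.v *)
From mathcomp Require Import all_boot.
Set Implicit Arguments. Unset Strict Implicit. Unset Printing Implicit Defensive.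

Inductive top := oX | owX | oF | oG | oY | owY | oO | oH.

Inductive formula (A : Type) :=
| Atom of A
| NAtom of A
| Or of formula A & formula A
| And of formula A & formula A
| Tmp of top & formula A.

Arguments Atom {A}. Arguments NAtom {A}.

Fixpoint fsize (A : Type) (phi : formula A) : nat :=
  match phi with
  | Atom _ | NAtom _ => 1
  | Or p q | And p q => fsize p + fsize q + 1
  | Tmp _ p => fsize p + 1
  end.

Fixpoint sat (A : finType) (s : seq {set A}) (phi : formula A) (i : nat) : bool :=
  match phi with
  | Atom p => p \in nth set0 s i
  | NAtom p => p \notin nth set0 s i
  | Or p q => sat s p i || sat s q i
  | And p q => sat s p i && sat s q i
  | Tmp oX p => (i.+1 < size s) && sat s p i.+1
  | Tmp owX p => (i.+1 == size s) || sat s p i.+1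
  | Tmp oF p => [exists j : 'I_(size s), (i <= j) && sat s p j]
  | Tmp oG p => [forall j : 'I_(size s), (i <= j) ==> sat s p j]
  | Tmp oY p => (0 < i) && sat s p i.-1
  | Tmp owY p => (i == 0) || sat s p i.-1
  | Tmp oO p => [exists j : 'I_(size s), (j <= i) && sat s p j]
  | Tmp oH p => [forall j : 'I_(size s), (j <= i) ==> sat s p j]
  end.

Definition models (A : finType) (s : seq {set A}) (phi : formula A) : bool :=
  sat s phi 0.

Definition defines (A : finType) (phi : formula A) (L : seq {set A} -> Prop) : Prop :=
  forall s : seq {set A}, s <> [::] -> (models s phi <-> L s).

Fixpoint in_LTL (A : Type) (S : pred top) (phi : formula A) : bool :=
  match phi with
  | Atom _ | NAtom _ => true
  | Or p q | And p q => in_LTL S p && in_LTL S q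
  | Tmp o p => S o && in_LTL S p
  end.

Definition in_F_LTL (A : Type) (S : pred top) (phi : formula A) : bool :=
  match phi with
  | Tmp oF alpha => in_LTL S alpha
  | _ => false
  end.

Definition S_O : pred top := fun o => if o is oO then true else false.
Definition S_XwXFG : pred top := fun o =>
  match o with oX | owX | oF | oG => true | _ => false end.

(* Main.v *)
Require Import Defs.
From mathcomp Require Import all_boot.
From mathcomp Require Import zify.
Set Implicit Arguments. Unset Strict Implicit. Unset Printing Implicit Defensive.

Fixpoint subs (A : Type) (phi : formula A) : seq (formula A) :=
  phi :: match phi with
         | Or p q | And p q => subs p ++ subs q
         | Tmp _ p => subs p
         | _ => [::]
         end.

Lemma size_subs (A : Type) (phi : formula A) : size (subs phi) = fsize phi.
Proof. elim: phi => //= [p IHp q IHq|p IHp q IHq|o p IHp]; rewrite ?size_cat; lia. Qed.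

Lemma satF (A : finType) (s : seq {set A}) p i :
  sat s (Tmp oF p) i = has (fun k => sat s p k) (iota i (size s - i)).
Proof.
rewrite /=; apply/existsP/hasP.
  case=> j /andP[ij Pj]; exists (nat_of_ord j) => //.
  by rewrite mem_iota; have := ltn_ord j; lia.
case=> k; rewrite mem_iota => /andP[ik ks] Pk.
have kn : k < size s by lia.
by exists (Ordinal kn); rewrite /= ik.
Qed.

Lemma satG (A : finType) (s : seq {set A}) p i :
  sat s (Tmp oG p) i = all (fun k => sat s p k) (iota i (size s - i)).
Proof.
rewrite /=; apply/forallP/allP.
  move=> H k; rewrite mem_iota => /andP[ik ks].
  have kn : k < size s by lia.
  by have := H (Ordinal kn); rewrite /= ik.
move=> H j; apply/implyP => ij; apply: H.
by rewrite mem_iota; have := ltn_ord j; lia.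
Qed.

Lemma shift (A : finType) (u v : seq {set A}) phi :
  in_LTL S_XwXFG phi -> forall j, sat (u ++ v) phi (size u + j) = sat v phi j.
Proof.
elim: phi => [a|a|p IHp q IHq|p IHp q IHq|o p IHp] /=.
- by move=> _ j; rewrite nth_cat ltnNge leq_addr /= addKn.
- by move=> _ j; rewrite nth_cat ltnNge leq_addr /= addKn.
- by move=> /andP[Hp Hq] j; rewrite IHp // IHq.
- by move=> /andP[Hp Hq] j; rewrite IHp // IHq.
case: o => //= /IHp IH j.
- by rewrite size_cat -addnS ltn_add2l IH.
- by rewrite size_cat -addnS eqn_add2l IH.
- have := satF (u ++ v) p (size u + j); rewrite /= => ->.
  have := satF v p j; rewrite /= => ->.
  rewrite size_cat subnDl iotaDl has_map; apply: eq_has => k /=; exact: IH.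
- have := satG (u ++ v) p (size u + j); rewrite /= => ->.
  have := satG v p j; rewrite /= => ->.
  rewrite size_cat subnDl iotaDl all_map; apply: eq_all => k /=; exact: IH.
Qed.

Lemma splitF (A : finType) (u v : seq {set A}) p i :
  in_LTL S_XwXFG p -> i <= size u ->
  sat (u ++ v) (Tmp oF p) i =
  has (fun k => sat (u ++ v) p k) (iota i (size u - i)) || sat v (Tmp oF p) 0.
Proof.
move=> Hp iu; rewrite !satF size_cat subn0.
have -> : size u + size v - i = (size u - i) + size v by lia.
rewrite iotaD has_cat subnKC //; congr (_ || _).
rewrite -{1}(addn0 (size u)) iotaDl has_map; apply: eq_has => k /=.
exact: shift.
Qed.

Lemma splitG (A : finType) (u v : seq {set A}) p i :
  in_LTL S_XwXFG p -> i <= size u ->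
  sat (u ++ v) (Tmp oG p) i =
  all (fun k => sat (u ++ v) p k) (iota i (size u - i)) && sat v (Tmp oG p) 0.
Proof.
move=> Hp iu; rewrite !satG size_cat subn0.
have -> : size u + size v - i = (size u - i) + size v by lia.
rewrite iotaD all_cat subnKC //; congr (_ && _).
rewrite -{1}(addn0 (size u)) iotaDl all_map; apply: eq_all => k /=.
exact: shift.
Qed.

Lemma local (A : finType) (u v1 v2 : seq {set A}) phi :
  v1 != [::] -> v2 != [::] -> in_LTL S_XwXFG phi ->
  all (fun c => sat v1 c 0 == sat v2 c 0) (subs phi) ->
  forall i, i <= size u -> sat (u ++ v1) phi i = sat (u ++ v2) phi i.
Proof.
move=> n1 n2; elim: phi.
- move=> a _ /andP[/eqP H _] i; rewrite leq_eqVlt => /orP[/eqP->|iu].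
    by have := @shift _ u v1 (Atom a) isT 0; have := @shift _ u v2 (Atom a) isT 0;
       rewrite addn0 => -> ->.
  by rewrite /= !nth_cat iu.
- move=> a _ /andP[/eqP H _] i; rewrite leq_eqVlt => /orP[/eqP->|iu].
    by have := @shift _ u v1 (NAtom a) isT 0; have := @shift _ u v2 (NAtom a) isT 0;
       rewrite addn0 => -> ->.
  by rewrite /= !nth_cat iu.
- move=> p IHp q IHq /andP[Hp Hq] /= /andP[_]; rewrite all_cat => /andP[Ap Aq] i iu.
  by rewrite /= (IHp Hp Ap i iu) (IHq Hq Aq i iu).
- move=> p IHp q IHq /andP[Hp Hq] /= /andP[_]; rewrite all_cat => /andP[Ap Aq] i iu.
  by rewrite /= (IHp Hp Ap i iu) (IHq Hq Aq i iu).
move=> o p IHp /andP[So Hp] /andP[/eqP H Ap] i iu.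
have sv1 : 0 < size v1 by case: (v1) n1.
have sv2 : 0 < size v2 by case: (v2) n2.
have Hin : in_LTL S_XwXFG (Tmp o p) by apply/andP.
move: iu; rewrite leq_eqVlt => /orP[/eqP->|iu].
  by have := @shift _ u v1 _ Hin 0; have := @shift _ u v2 _ Hin 0;
     rewrite addn0 => -> ->.
case: o So Hin H => // _ Hin H.
- rewrite /= !size_cat.
  have -> : i.+1 < size u + size v1 by lia.
  have -> : i.+1 < size u + size v2 by lia.
  by rewrite IHp.
- rewrite /= !size_cat.
  have -> : (i.+1 == size u + size v1) = false by lia.
  have -> : (i.+1 == size u + size v2) = false by lia.
  by rewrite IHp.
- rewrite !splitF ?(ltnW iu) // H; congr (_ || _).
  apply: eq_in_has => k; rewrite mem_iota => /andP[_ ku].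
  by apply: IHp => //; lia.
- rewrite !splitG ?(ltnW iu) // H; congr (_ && _).
  apply: eq_in_all => k; rewrite mem_iota => /andP[_ ku].
  by apply: IHp => //; lia.
Qed.

Definition atC n : 'I_((3*n).+1) := inord 0.
Definition atP n (i : 'I_n) : 'I_((3*n).+1) := inord (1 + i).
Definition atQ n (i : 'I_n) : 'I_((3*n).+1) := inord (1 + n + i).
Definition atX n (i : 'I_n) : 'I_((3*n).+1) := inord (1 + n + n + i).

Lemma valC n : nat_of_ord (atC n) = 0.
Proof. by rewrite /atC inordK. Qed.
Lemma valP n (i : 'I_n) : nat_of_ord (atP i) = 1 + i.
Proof. by rewrite /atP inordK //; have := ltn_ord i; lia. Qed.
Lemma valQ n (i : 'I_n) : nat_of_ord (atQ i) = 1 + n + i.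
Proof. by rewrite /atQ inordK //; have := ltn_ord i; lia. Qed.
Lemma valX n (i : 'I_n) : nat_of_ord (atX i) = 1 + n + n + i.
Proof. by rewrite /atX inordK //; have := ltn_ord i; lia. Qed.

Definition clause n (i : 'I_n) : formula 'I_((3*n).+1) :=
  And (Or (NAtom (atX i)) (Tmp oO (Atom (atP i))))
      (Or (Atom (atX i)) (Tmp oO (Atom (atQ i)))).

Definition alpha n : formula 'I_((3*n).+1) :=
  foldr (fun i acc => And (clause i) acc) (Atom (atC n)) (enum 'I_n).

Definition phi n : formula 'I_((3*n).+1) := Tmp oF (alpha n).

Lemma in_alpha n : in_LTL S_O (alpha n).
Proof. by rewrite /alpha; elim: (enum 'I_n) => //= i l ->. Qed.

Lemma size_alpha n : fsize (alpha n) = 10 * n + 1.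
Proof.
rewrite /alpha.
have -> : forall l : seq 'I_n, fsize (foldr (fun i acc => And (clause i) acc) (Atom (atC n)) l) = 10 * size l + 1.
  by elim=> //= i l ->; rewrite /=; lia.
by rewrite size_enum_ord.
Qed.

Lemma sat_alpha n (s : seq {set 'I_((3*n).+1)}) j :
  sat s (alpha n) j = (atC n \in nth set0 s j) && all (fun i => sat s (clause i) j) (enum 'I_n).
Proof.
rewrite /alpha; elim: (enum 'I_n) => /= [|i l ->]; first by rewrite andbT.
by rewrite andbCA.
Qed.

Definition uA n (A : {set 'I_n}) : {set 'I_((3*n).+1)} :=
  [set a | [exists i, (i \in A) && (nat_of_ord a == 1 + i)] ||
           [exists i, (i \notin A) && (nat_of_ord a == 1 + n + i)]].

Definition vX n (X : {set 'I_n}) : {set 'I_((3*n).+1)} :=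
  [set a | (nat_of_ord a == 0) || [exists i, (i \in X) && (nat_of_ord a == 1 + n + n + i)]].

Definition tr n (A : {set 'I_n}) (G : {set {set 'I_n}}) :=
  uA A :: set0 :: map (@vX n) (enum G).

Lemma P_uA n (A : {set 'I_n}) i : (atP i \in uA A) = (i \in A).
Proof.
rewrite inE valP; apply/orP/idP.
  case=> /existsP[i' /andP[H /eqP E]].
    by have -> : i = i' by apply: val_inj; rewrite /=; lia.
  by have := ltn_ord i; lia.
by move=> H; left; apply/existsP; exists i; rewrite H eqxx.
Qed.

Lemma Q_uA n (A : {set 'I_n}) i : (atQ i \in uA A) = (i \notin A).
Proof.
rewrite inE valQ; apply/orP/idP.
  case=> /existsP[i' /andP[H /eqP E]].
    by have := ltn_ord i'; lia.
  by have -> : i = i' by apply: val_inj; rewrite /=; lia.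
by move=> H; right; apply/existsP; exists i; rewrite H eqxx.
Qed.

Lemma C_uA n (A : {set 'I_n}) : (atC n \in uA A) = false.
Proof.
rewrite inE valC; apply/negbTE/negP => /orP[] /existsP[i /andP[_ /eqP E]]; lia.
Qed.

Lemma X_vX n (X : {set 'I_n}) i : (atX i \in vX X) = (i \in X).
Proof.
rewrite inE valX /=; apply/existsP/idP.
  by case=> i' /andP[H /eqP E]; have -> : i = i' by apply: val_inj; rewrite /=; lia.
by move=> H; exists i; rewrite H eqxx.
Qed.

Lemma C_vX n (X : {set 'I_n}) : atC n \in vX X.
Proof. by rewrite inE valC. Qed.

Lemma P_vX n (X : {set 'I_n}) i : (atP i \in vX X) = false.
Proof.
rewrite inE valP /=; apply/negbTE/negP => /existsP[i' /andP[_ /eqP E]].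
by have := ltn_ord i; lia.
Qed.

Lemma Q_vX n (X : {set 'I_n}) i : (atQ i \in vX X) = false.
Proof.
rewrite inE valQ /=; apply/negbTE/negP => /existsP[i' /andP[_ /eqP E]].
by have := ltn_ord i; lia.
Qed.

Lemma letter_cases n (A : {set 'I_n}) G k : 0 < k ->
  nth set0 (tr A G) k = set0 \/ exists X, nth set0 (tr A G) k = vX X.
Proof.
case: k => [//|[_|k _]] /=; first by left.
case: (ltnP k (size (map (@vX n) (enum G)))) => [lt|ge].
  by right; exists (nth set0 (enum G) k); rewrite (nth_map set0) // -(size_map (@vX n)).
by left; rewrite nth_default.
Qed.

Lemma O_P n (A : {set 'I_n}) G i j :
  sat (tr A G) (Tmp oO (Atom (atP i))) j = (i \in A).
Proof.
rewrite /=; apply/existsP/idP.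
  case=> [[[|k] kl] /andP[_]]; first by rewrite /= P_uA.
  change (nat_of_ord (Ordinal kl)) with k.+1.
  by case: (letter_cases A G (ltn0Sn k)) => [->|[X ->]]; rewrite ?P_vX ?inE.
move=> H; have s0 : 0 < size (tr A G) by [].
by exists (Ordinal s0); rewrite /= P_uA H.
Qed.

Lemma O_Q n (A : {set 'I_n}) G i j :
  sat (tr A G) (Tmp oO (Atom (atQ i))) j = (i \notin A).
Proof.
rewrite /=; apply/existsP/idP.
  case=> [[[|k] kl] /andP[_]]; first by rewrite /= Q_uA.
  change (nat_of_ord (Ordinal kl)) with k.+1.
  by case: (letter_cases A G (ltn0Sn k)) => [->|[X ->]]; rewrite ?Q_vX ?inE.
move=> H; have s0 : 0 < size (tr A G) by [].
by exists (Ordinal s0); rewrite /= Q_uA H.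
Qed.

Lemma sat_clause n (A : {set 'I_n}) G i j :
  sat (tr A G) (clause i) j =
  ((atX i \notin nth set0 (tr A G) j) || (i \in A)) &&
  ((atX i \in nth set0 (tr A G) j) || (i \notin A)).
Proof. by rewrite -(O_Q A G i j) -(O_P A G i j). Qed.

Lemma memL n (A : {set 'I_n}) G : models (tr A G) (phi n) = (A \in G).
Proof.
have sz : size (tr A G) = (size (enum G)).+2 by rewrite /tr /= size_map.
have nth0 : nth set0 (tr A G) 0 = uA A by [].
have nth1 : nth set0 (tr A G) 1 = set0 by [].
have nthS : forall t, t < size (enum G) -> nth set0 (tr A G) t.+2 = vX (nth set0 (enum G) t).
  by move=> t tl; rewrite /tr /= (nth_map set0).
rewrite /models /phi satF subn0 sz.
rewrite -[(size (enum G)).+2]/(2 + size (enum G)) iotaD has_cat.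
rewrite /= !sat_alpha nth0 nth1 C_uA inE /=.
have E : forall m, iota 2 m = map (addn 2) (iota 0 m) by move=> m; rewrite -iotaDl addn0.
rewrite ?add0n E has_map.
rewrite -mem_enum; apply/hasP/(nthP set0).
  move=> [t]; rewrite mem_iota => /andP[_ ts] /=.
  rewrite sat_alpha (add2n t) (nthS t ts) C_vX andTb => /allP H.
  exists t => //; apply/setP => i.
  have := H i (mem_enum _ i); rewrite sat_clause (nthS t ts) X_vX.
  by case: (i \in nth set0 (enum G) t); case: (i \in A).
move=> [t ts Et]; exists t; first by rewrite mem_iota.
rewrite /= sat_alpha (add2n t) (nthS t ts) C_vX andTb.
apply/allP => i _; rewrite sat_clause (nthS t ts) X_vX Et.
by case: (i \in A).
Qed.

Theorem theorem1 :
  exists (m : nat -> nat) (L : forall n : nat, seq {set 'I_(m n)} -> Prop),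
    (* (i) polynomial-size F(LTL[O]) formulae *)
    (exists c k : nat, forall n : nat, 1 <= n ->
       exists phi : formula 'I_(m n),
         in_F_LTL S_O phi /\ defines phi (L n) /\ fsize phi <= c * n ^ k) /\
    (* (ii) every LTL[X,wX,F,G] formula for L n has size 2^Omega(n) *)
    (exists d N : nat, forall n : nat, N <= n ->
       forall psi : formula 'I_(m n),
         in_LTL S_XwXFG psi -> defines psi (L n) -> 2 ^ n <= fsize psi ^ d).
Proof.
exists (fun n => (3 * n).+1), (fun n s => models s (phi n)); split.
  exists 12, 1 => n n1; exists (phi n); split; first exact: in_alpha.
  split; first by [].
  by rewrite /= size_alpha expn1; lia.
exists 1, 0 => n _ psi Hpsi Hdef; rewrite expn1.
pose k := size (subs psi).
pose T (G : {set {set 'I_n}}) : {ffun 'I_k -> bool} :=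
  [ffun i : 'I_k => sat (set0 :: map (@vX n) (enum G)) (nth psi (subs psi) i) 0].
have injT : injective T.
  move=> G1 G2 eqT; apply/setP => A.
  have key : all (fun c => sat (set0 :: map (@vX n) (enum G1)) c 0 ==
                          sat (set0 :: map (@vX n) (enum G2)) c 0) (subs psi).
    apply/(all_nthP psi) => i ilt.
    by have := congr1 (fun f : {ffun 'I_k -> bool} => f (Ordinal ilt : 'I_k)) eqT; rewrite !ffunE => ->.
  have := @local _ [:: uA A] (set0 :: map (@vX n) (enum G1)) (set0 :: map (@vX n) (enum G2)) psi isT isT Hpsi key 0 (leq0n _).
  rewrite -!memL.
  have E1 := Hdef (tr A G1) (fun h => ltac:(discriminate h)); have E2 := Hdef (tr A G2) (fun h => ltac:(discriminate h)).
  rewrite /models /= in E1 E2 *.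
  move=> E; apply/idP/idP => H.
    by apply/E2; rewrite -E; apply/E1.
  by apply/E1; rewrite E; apply/E2.
have := leq_card T injT.
rewrite card_ffun card_bool card_ord => H.
have H1 : 2 ^ #|{set 'I_n}| <= #|{set {set 'I_n}}|.
  by have := card_powerset [set: {set 'I_n}]; rewrite cardsT => <-; exact: max_card.
have H2 : 2 ^ n <= #|{set 'I_n}|.
  by have := card_powerset [set: 'I_n]; rewrite cardsT card_ord => <-; exact: max_card.
have H3 : 2 ^ (2 ^ n) <= 2 ^ k.
  apply: leq_trans H; apply: leq_trans H1; by rewrite leq_exp2l.
by rewrite leq_exp2l // /k size_subs in H3.
Qed.
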